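(* Regarded as a subset of $\mathbb{RP}^1\times\mathbb{RP}^2$, the space of half-flat structures, namely $\{([x_1u_1+x_2u_2],[y_1u_1^2+y_2u_1u_2+y_3u_2^2])\colon x_1y_2+x_2(y_1-y_3)=0\}$, is (via projection onto the second factor) the blow-up of $\mathbb{RP}^2$ at $[1:0:1]$. In particular, it is connected. The points projecting onto $[1:0:1]$ correspond to Hermitian structures on $\mathfrak{so}(3,\mathbb C)$.
   Context: A pair $([\mathbf x],[\mathbf y])\in\mathbb{RP}^1\times\mathbb{RP}^2$ with $\mathbf x=x_1u_1+x_2u_2$, $\mathbf y=y_1u_1^2+y_2u_1u_2+y_3u_2^2$ determines the Lie algebra with basis $e^1,\dots,e^6$ of its dual satisfying ($e^{ij}=e^i\wedge e^j$) $de^1=(x_2y_1-x_1y_2)e^{35}-x_1y_3(e^{36}+e^{45})-x_2y_3e^{46}$, $de^3=-(x_2y_1-x_1y_2)e^{15}+x_1y_3(e^{16}+e^{25})+x_2y_3e^{26}$, $de^5=(x_2y_1-x_1y_2)e^{13}-x_1y_3(e^{14}+e^{23})-x_2y_3e^{24}$, $de^2=x_1y_1e^{35}-(x_1y_3-y_2x_2)e^{46}+x_2y_1(e^{36}+e^{45})$, $de^4=-x_1y_1e^{15}+(x_1y_3-y_2x_2)e^{26}-x_2y_1(e^{16}+e^{25})$, $de^6=x_1y_1e^{13}-(x_1y_3-y_2x_2)e^{24}+x_2y_1(e^{14}+e^{23})$, together with the left-invariant $SO(3)$-structure and $SU(3)$-structure defined by the coframe: $\sigma=e^{12}+e^{34}+e^{56}$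 and $\gamma=\tfrac43(\eta_0+\eta_1+\eta_2)$, where $\eta_j=\eta^{\theta_j}$, $\theta_j\in\{0,2\pi/3,-2\pi/3\}$, $\eta^\theta=(\cos\theta\, e^1+\sin\theta\, e^2)\wedge(\cos\theta\, e^3+\sin\theta\, e^4)\wedge(\cos\theta\, e^5+\sin\theta\, e^6)$; $\hat\gamma=J\gamma$. Its intrinsic torsion parameters are $\lambda_1=x_1y_1$, $\lambda_2=x_1y_2+x_2y_1$, $\lambda_3=x_1y_3+x_2y_2$, $\lambda_4=x_2y_3$ (with $d\hat\gamma=\tfrac12(\lambda_3-\lambda_1)\sigma^2$ and $d\sigma=\tfrac34(\lambda_1-\lambda_3)\gamma+\tfrac34(\lambda_2-\lambda_4)\hat\gamma+\beta$, $\beta$ a form of type $W_3$). The $SU(3)$-structure is half-flat if $d(\sigma^2)=0$ and $d\gamma=0$, which here means $\lambda_2=\lambda_4$; it is Hermitian if moreover $\lambda_1=\lambda_3$. *)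

(* Defs.v *)
From HB Require Import structures.
From mathcomp Require Import all_boot all_order all_algebra.
From mathcomp Require Import all_classical all_reals all_analysis.
From mathcomp Require Import complex ring generic_quotient.

Set Implicit Arguments. Unset Strict Implicit. Unset Printing Implicit Defensive.
Import Order.TTheory GRing.Theory Num.Theory.
Import numFieldNormedType.Exports.
Local Open Scope classical_set_scope.
Local Open Scope ring_scope.

Section Proj.
Variable R : realType.

Definition nzvec (n : nat) := set_type [set x : 'rV[R]_n.+1 | x != 0].

(** Proportionality of nonzero vectors: all 2x2 minors vanish. *)
Definition proprel n : rel (nzvec n) := fun x y =>
  [forall i, [forall j, val x 0 i * val y 0 j == val x 0 j * val y 0 i]].

Lemma proprel_refl n : reflexive (@proprel n).
Proof. by move=> x; apply/forallP => i; apply/forallP => j; rewrite mulrC. Qed.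

Lemma proprel_sym n : symmetric (@proprel n).
Proof.
move=> x y; apply/idP/idP => /forallP H; apply/forallP => i; apply/forallP => j;
  by move/forallP: (H i) => /(_ j) /eqP E; rewrite mulrC -E mulrC.
Qed.

Lemma proprel_trans n : transitive (@proprel n).
Proof.
move=> y x z /forallP Hxy /forallP Hyz; apply/forallP => i; apply/forallP => j.
have /existsP [k yk] : [exists k, val y 0 k != 0].
  apply: contraT; rewrite negb_exists => /forallP H.
  suff E : val y = 0 by have := set_valP y; rewrite /= E eqxx.
  by apply/matrixP => a l; rewrite mxE (ord1 a); apply/eqP/negPn/H.
have E1 l : val x 0 l * val y 0 k = val x 0 k * val y 0 l.
  by move/forallP: (Hxy l) => /(_ k) /eqP.
have E2 l : val y 0 k * val z 0 l = val y 0 l * val z 0 k.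
  by move/forallP: (Hyz k) => /(_ l) /eqP.
apply/eqP; apply: (mulIf (mulf_neq0 yk yk)).
have -> : val x 0 i * val z 0 j * (val y 0 k * val y 0 k) =
  (val x 0 i * val y 0 k) * (val y 0 k * val z 0 j) by ring.
have -> : val x 0 j * val z 0 i * (val y 0 k * val y 0 k) =
  (val x 0 j * val y 0 k) * (val y 0 k * val z 0 i) by ring.
by rewrite !E1 !E2; ring.
Qed.

Definition projequiv n := EquivRel (@proprel n) (@proprel_refl n)
  (@proprel_sym n) (@proprel_trans n).

Definition RP (n : nat) : Type := quotient_topology {eq_quot (projequiv n)}%qT.

(** Homogeneous coordinates (0-based) of a chosen representative. *)
Definition hc n (q : RP n) (i : 'I_n.+1) : R := val (repr q : nzvec n) 0 i.

Definition hcn n (q : RP n) (i : nat) : R := hc q (inord i).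

(** x = x_1 u_1 + x_2 u_2 in RP^1, y = y_1 u_1^2 + y_2 u_1 u_2 + y_3 u_2^2 in RP^2;
    z = ([x],[y]) in RP^1 x RP^2.  Coordinates of chosen representatives: *)
Definition x1 (z : RP 1 * RP 2) := hcn z.1 0.
Definition x2 (z : RP 1 * RP 2) := hcn z.1 1.
Definition y1 (z : RP 1 * RP 2) := hcn z.2 0.
Definition y2 (z : RP 1 * RP 2) := hcn z.2 1.
Definition y3 (z : RP 1 * RP 2) := hcn z.2 2.

(** The space of half-flat structures, as in the statement:
    { ([x],[y]) : x1 y2 + x2 (y1 - y3) = 0 }  (this equation is homogeneous,
    so it does not depend on the representatives). *)
Definition halfflat_set : set (RP 1 * RP 2) :=
  [set z | x1 z * y2 z + x2 z * (y1 z - y3 z) = 0].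

Definition lam1 z := x1 z * y1 z.
Definition lam2 z := x1 z * y2 z + x2 z * y1 z.
Definition lam3 z := x1 z * y3 z + x2 z * y2 z.
Definition lam4 z := x2 z * y3 z.

Definition halfflat_cond (z : RP 1 * RP 2) : Prop := lam2 z = lam4 z.
Definition hermitian_str (z : RP 1 * RP 2) : Prop := lam2 z = lam4 z /\ lam1 z = lam3 z.

(** The point [1:0:1] of RP^2 (a point [y] equals [1:0:1] iff y_2 = 0 and y_1 = y_3). *)
Definition is_p101 (q : RP 2) : Prop := hcn q 1 = 0 /\ hcn q 0 = hcn q 2.

(** Standard model of the blow-up of RP^2 at [1:0:1]: the closure of the graph
    of the projection from [1:0:1], [y] |-> [l1(y) : l2(y)], where
    l1 = y_2, l2 = y_1 - y_3 are linear forms cutting out [1:0:1]: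
    Bl = { ([a0:a1],[y]) in RP^1 x RP^2 : a0 * l2(y) = a1 * l1(y) },
    with the blow-down map being the projection onto the second factor. *)
Definition blowup101 : set (RP 1 * RP 2) :=
  [set z | hcn z.1 0 * (hcn z.2 0 - hcn z.2 2) = hcn z.1 1 * hcn z.2 1].

(** Projective transformation of RP^n induced by a matrix M acting on row
    vectors: [v] |-> [v M] (for invertible M this is well defined). *)
Definition projmap n (M : 'M[R]_n.+1) (q : RP n) : RP n :=
  match (insub (val (repr q : nzvec n) *m M) : option (nzvec n)) with
  | Some w => (\pi_(RP n) w)%qT
  | None => q
  end.

(** The Lie algebra g_(x,y) on R^6 (basis e_1..e_6, dual basis e^1..e^6),
    defined by the differentials d e^k of the statement, with the convention
    d alpha (u, v) = - alpha([u, v]).  [E a b] is the 2-form e^a /\ e^b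
    (1-based indices), as an antisymmetric bilinear form on coordinates. *)
Definition E (a b : nat) (i j : 'I_6) : R :=
  ((val i == a.-1) && (val j == b.-1))%:R - ((val i == b.-1) && (val j == a.-1))%:R.

Definition de (X1 X2 Y1 Y2 Y3 : R) (k : 'I_6) (i j : 'I_6) : R :=
  let al := X2 * Y1 - X1 * Y2 in
  let be := X1 * Y3 in
  let ga := X2 * Y3 in
  let dl := X1 * Y1 in
  let ep := X1 * Y3 - Y2 * X2 in
  let ze := X2 * Y1 in
  match val k with
  | 0 => al * E 3 5 i j - be * (E 3 6 i j + E 4 5 i j) - ga * E 4 6 i j
  | 1 => dl * E 3 5 i j - ep * E 4 6 i j + ze * (E 3 6 i j + E 4 5 i j)
  | 2 => - al * E 1 5 i j + be * (E 1 6 i j + E 2 5 i j) + ga * E 2 6 i j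
  | 3 => - dl * E 1 5 i j + ep * E 2 6 i j - ze * (E 1 6 i j + E 2 5 i j)
  | 4 => al * E 1 3 i j - be * (E 1 4 i j + E 2 3 i j) - ga * E 2 4 i j
  | _ => dl * E 1 3 i j - ep * E 2 4 i j + ze * (E 1 4 i j + E 2 3 i j)
  end.

Definition lie_bracket (X1 X2 Y1 Y2 Y3 : R) (u v : 'rV[R]_6) : 'rV[R]_6 :=
  \row_k (- \sum_i \sum_j de X1 X2 Y1 Y2 Y3 k i j * u 0 i * v 0 j).

Local Open Scope complex_scope.
Definition so3C : set 'M[R[i]]_3 := [set A | A^T = - A].

Definition iso_so3C (br : 'rV[R]_6 -> 'rV[R]_6 -> 'rV[R]_6) : Prop :=
  exists phi : 'rV[R]_6 -> 'M[R[i]]_3,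
    [/\ forall (a : R) u v, phi (a *: u + v) = a%:C *: phi u + phi v,
        injective phi,
        forall u, so3C (phi u),
        forall A, so3C A -> exists u, phi u = A &
        forall u v, phi (br u v) = phi u *m phi v - phi v *m phi u].
End Proj.

(* Main.v *)
Require Import Defs.
From HB Require Import structures.
From mathcomp Require Import all_boot all_order all_algebra.
From mathcomp Require Import all_classical all_reals all_analysis.
From mathcomp Require Import complex ring lra generic_quotient.
Import Order.TTheory GRing.Theory Num.Theory.
Import numFieldNormedType.Exports.
Local Open Scope classical_set_scope.
Local Open Scope ring_scope.
Set Implicit Arguments. Unset Strict Implicit. Unset Printing Implicit Defensive.
Local Open Scope complex_scope.
Ltac csimp := do ?
  [ rewrite -[(_ %:C)%C]/(_ +i* 0)%C
  | rewrite -[- (_ +i* _)%C]/(_ +i* _)%C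
  | rewrite -[(_ +i* _)%C - (_ +i* _)%C]/(_ +i* _)%C
  | rewrite -[(_ +i* _)%C + (_ +i* _)%C]/(_ +i* _)%C
  | rewrite -[(_ +i* _)%C * (_ +i* _)%C]/(_ +i* _)%C
  | rewrite -[_ *: (_ +i* _)%C]/(_ +i* _)%C ].
Notation o3 k := (@Ordinal 3 k isT).
Section Hat.
Variable K : comNzRingType.
Definition hat (a b c : K) : 'M[K]_3 := \matrix_(i, j)
  match val i, val j with
  | 0, 1 => - c | 0, 2 => b | 1, 0 => c | 1, 2 => - a | 2, 0 => - b | 2, 1 => a
  | _, _ => 0 end.

Lemma hat_comm a1 a2 a3 b1 b2 b3 :
  hat a1 a2 a3 *m hat b1 b2 b3 - hat b1 b2 b3 *m hat a1 a2 a3 =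
  hat (a2 * b3 - a3 * b2) (a3 * b1 - a1 * b3) (a1 * b2 - a2 * b1).
Proof.
apply/matrixP => i j; rewrite !mxE !big_ord_recl !big_ord0 !mxE /=.
case: i => [[|[|[|i]]] Hi] //; case: j => [[|[|[|j]]] Hj] //=; ring.
Qed.

Lemma hat_skew a b c : (hat a b c)^T = - hat a b c.
Proof.
apply/matrixP => i j; rewrite !mxE /=.
case: i => [[|[|[|i]]] Hi] //; case: j => [[|[|[|j]]] Hj] //=; ring.
Qed.

Lemma hat_lin s a1 a2 a3 b1 b2 b3 :
  hat (s * a1 + b1) (s * a2 + b2) (s * a3 + b3) = s *: hat a1 a2 a3 + hat b1 b2 b3.
Proof.
apply/matrixP => i j; rewrite !mxE /=.
case: i => [[|[|[|i]]] Hi] //; case: j => [[|[|[|j]]] Hj] //=; ring.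
Qed.
End Hat.
Notation o6 k := (@Ordinal 6 k isT).
Section P4. Variable R : realType.
Definition cre (x : R[i]) : R := let: Complex a _ := x in a.
Definition cim (x : R[i]) : R := let: Complex _ b := x in b.
Lemma sum6 (F : 'I_6 -> R) : \sum_(i < 6) F i =
  F (o6 0) + F (o6 1) + F (o6 2) + F (o6 3) + F (o6 4) + F (o6 5).
Proof.
rewrite !big_ord_recl big_ord0 addr0 !addrA.
by repeat congr (_ + _); congr F; apply: val_inj.
Qed.
Definition Uc (u : 'rV[R]_6) (k : nat) : R[i] :=
  match k with
  | 0 => (u 0 (o6 0)) +i* (u 0 (o6 1))
  | 1 => (u 0 (o6 2)) +i* (u 0 (o6 3))
  | _ => (u 0 (o6 4)) +i* (u 0 (o6 5)) end.
Lemma br0 (X1 X2 c : R) u v : Uc (lie_bracket X1 X2 c 0 c u v) 0 =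
  - ((c * X2) +i* (c * X1)) * (Uc u 1 * Uc v 2 - Uc u 2 * Uc v 1).
Proof. rewrite /Uc /lie_bracket !mxE !sum6 /de /E /=. csimp. congr Complex; ring. Qed.
Lemma br1 (X1 X2 c : R) u v : Uc (lie_bracket X1 X2 c 0 c u v) 1 =
  - ((c * X2) +i* (c * X1)) * (Uc u 2 * Uc v 0 - Uc u 0 * Uc v 2).
Proof. rewrite /Uc /lie_bracket !mxE !sum6 /de /E /=. csimp. congr Complex; ring. Qed.
Lemma br2 (X1 X2 c : R) u v : Uc (lie_bracket X1 X2 c 0 c u v) 2 =
  - ((c * X2) +i* (c * X1)) * (Uc u 0 * Uc v 1 - Uc u 1 * Uc v 0).
Proof. rewrite /Uc /lie_bracket !mxE !sum6 /de /E /=. csimp. congr Complex; ring. Qed.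

Lemma Uc_lin (a : R) u v k : Uc (a *: u + v) k = a%:C * Uc u k + Uc v k.
Proof. by case: k => [|[|k]]; rewrite /Uc !mxE; csimp; congr Complex; ring. Qed.

Lemma iso_gen (X1 X2 c : R) : (X1 != 0) || (X2 != 0) -> c != 0 ->
  iso_so3C (lie_bracket X1 X2 c 0 c).
Proof.
move=> hX hc.
set m : R[i] := - ((c * X2) +i* (c * X1)).
have hm : m != 0.
  rewrite oppr_eq0; apply/negP => /eqP [] /eqP h2 /eqP h1.
  move: h1 h2; rewrite !mulf_eq0 (negbTE hc) /= => /eqP h1 /eqP h2.
  by move: hX; rewrite h1 h2 eqxx.
pose phi u := hat (m * Uc u 0) (m * Uc u 1) (m * Uc u 2).
exists phi; split.
- move=> a u v; rewrite /phi !Uc_lin -hat_lin; congr hat; ring.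
- move=> u v E.
  have e k : Uc u k = Uc v k.
    apply: (mulfI hm).
    case: k => [|[|k]].
    + by have := congr1 (fun M : 'M[R[i]]_3 => M (o3 2) (o3 1)) E; rewrite /phi !mxE.
    + by have := congr1 (fun M : 'M[R[i]]_3 => M (o3 0) (o3 2)) E; rewrite /phi !mxE.
    + by have := congr1 (fun M : 'M[R[i]]_3 => M (o3 1) (o3 0)) E; rewrite /phi !mxE.
  move: (e 0%N) (e 1%N) (e 2%N); rewrite /Uc => -[e0 e1] [e2 e3] [e4 e5].
  apply/matrixP => i k; rewrite (ord1 i).
  case: k => [[|[|[|[|[|[|k]]]]]] Hk] //;
    by rewrite (bool_irrelevance Hk isT).
- by move=> u; rewrite /so3C /= /phi hat_skew.
- move=> A; rewrite /so3C /= => hA.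
  have s i j : A j i = - A i j.
    by have := congr1 (fun M : 'M[R[i]]_3 => M i j) hA; rewrite !mxE.
  have d i : A i i = 0.
    apply/eqP; have := s i i; move/(congr1 (fun x => x + A i i)).
    rewrite addNr -mulr2n => /eqP; rewrite mulrn_eq0 /= eq_sym; exact.
  pose z k := (if k is 0%N then A (o3 2) (o3 1) else if k is 1%N then A (o3 0) (o3 2)
               else A (o3 1) (o3 0)) / m.
  exists (\row_(j < 6) match val j with 0 => cre (z 0%N) | 1 => cim (z 0%N)
     | 2 => cre (z 1%N) | 3 => cim (z 1%N) | 4 => cre (z 2%N) | _ => cim (z 2%N) end)%N.
  have U0 : Uc (\row_(j < 6) match val j with 0 => cre (z 0%N) | 1 => cim (z 0%N)
     | 2 => cre (z 1%N) | 3 => cim (z 1%N) | 4 => cre (z 2%N) | _ => cim (z 2%N) end)%N 0 = z 0%N.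
    by rewrite /Uc !mxE /=; case: (z 0%N).
  have U1 : Uc (\row_(j < 6) match val j with 0 => cre (z 0%N) | 1 => cim (z 0%N)
     | 2 => cre (z 1%N) | 3 => cim (z 1%N) | 4 => cre (z 2%N) | _ => cim (z 2%N) end)%N 1 = z 1%N.
    by rewrite /Uc !mxE /=; case: (z 1%N).
  have U2 : Uc (\row_(j < 6) match val j with 0 => cre (z 0%N) | 1 => cim (z 0%N)
     | 2 => cre (z 1%N) | 3 => cim (z 1%N) | 4 => cre (z 2%N) | _ => cim (z 2%N) end)%N 2 = z 2%N.
    by rewrite /Uc !mxE /=; case: (z 2%N).
  rewrite /phi U0 U1 U2 /z /= ![m * (_ / m)]mulrC !divfK //.
  apply/matrixP => i j; rewrite !mxE.
  case: i => [[|[|[|i]]] Hi] //; case: j => [[|[|[|j]]] Hj] //=;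
    rewrite ?(bool_irrelevance Hi isT) ?(bool_irrelevance Hj isT) ?d //.
  all: try (rewrite s; congr (- A _ _); apply: val_inj; done).
- move=> u v; rewrite /phi hat_comm br0 br1 br2; rewrite -/m; congr hat; ring.
Qed.
End P4.
Section P13. Variable R : realType.
Local Open Scope quotient_scope.

Lemma nz_of n (p : nzvec R n) : val p != 0.
Proof. by have := set_valP p; rewrite /= => ->. Qed.

Lemma nz_coord n (p : nzvec R n) : exists k, val p 0 k != 0.
Proof.
apply/existsP; apply: contraT; rewrite negb_exists => /forallP H.
suff E : val p = 0 by move: (nz_of p); rewrite E eqxx.
by apply/matrixP => a l; rewrite mxE (ord1 a); apply/eqP/negPn/H.
Qed.

Lemma prop_scale n (p v : nzvec R n) : proprel p v ->
  exists2 l : R, l != 0 & forall i, val p 0 i = l * val v 0 i.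
Proof.
move=> /forallP H; have [k vk] := nz_coord v.
have E i : val p 0 i * val v 0 k = val p 0 k * val v 0 i.
  by move/forallP: (H i) => /(_ k) /eqP.
exists (val p 0 k / val v 0 k).
  rewrite mulf_neq0 ?invr_eq0 //; apply: contraT => /negPn /eqP pk0.
  have [k' pk'] := nz_coord p; move: (E k'); rewrite pk0 mul0r.
  by move/eqP; rewrite mulf_eq0 (negbTE pk') (negbTE vk).
move=> i; apply: (mulIf vk); rewrite E; field; exact: vk.
Qed.

Lemma pi_eqP n (p v : nzvec R n) : (\pi_(RP R n) p = \pi_(RP R n) v) <-> proprel p v.
Proof. by split; [move=> /eqquotP | move=> h; apply/eqquotP]. Qed.

Lemma repr_pi n (w : nzvec R n) : proprel (repr (\pi_(RP R n) w)) w.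
Proof. by apply/pi_eqP; rewrite reprK. Qed.

Lemma scale_prop n (p v : nzvec R n) (l : R) :
  (forall i, val p 0 i = l * val v 0 i) -> proprel p v.
Proof.
move=> h; apply/forallP => i; apply/forallP => j; rewrite !h; apply/eqP; ring.
Qed.

Lemma io n k (H : (k < n.+1)%N) : inord k = Ordinal H :> 'I_n.+1.
Proof. by apply/val_inj; rewrite /= inordK. Qed.

Lemma nz2 (p : nzvec R 1) : (val p 0 (inord 0) != 0) || (val p 0 (inord 1) != 0).
Proof.
have [k] := nz_coord p; rewrite (@io 1 0 isT) (@io 1 1 isT).
by case: k => [[|[|k]] Hk] //; rewrite (bool_irrelevance Hk isT) => -> //; rewrite orbT.
Qed.

Lemma nz3 (p : nzvec R 2) :
  [|| val p 0 (inord 0) != 0, val p 0 (inord 1) != 0 | val p 0 (inord 2) != 0].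
Proof.
have [k] := nz_coord p; rewrite (@io 2 0 isT) (@io 2 1 isT) (@io 2 2 isT).
by case: k => [[|[|[|k]]] Hk] //; rewrite (bool_irrelevance Hk isT) => -> //; rewrite ?orbT.
Qed.

Lemma sq2 (a b : R) : (a != 0) || (b != 0) -> a ^+ 2 + b ^+ 2 != 0.
Proof.
move=> h; rewrite paddr_eq0 ?sqr_ge0 // !sqrf_eq0; apply: contraL h.
by case/andP => /eqP -> /eqP ->; rewrite eqxx.
Qed.

Lemma alg3 (X1 X2 Y1 Y2 Y3 : R) : (X1 != 0) || (X2 != 0) ->
  X1 * Y2 + X2 * (Y1 - Y3) = 0 ->
  (Y2 = 0 /\ Y1 = Y3 <-> (X1 * Y2 + X2 * Y1 = X2 * Y3 /\ X1 * Y1 = X1 * Y3 + X2 * Y2)).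
Proof.
move=> hx hh; split.
  by case=> -> ->; split; ring.
case=> h1 h2.
have hs := sq2 hx.
have e2 : (X1 ^+ 2 + X2 ^+ 2) * Y2 = 0.
  have -> : (X1 ^+ 2 + X2 ^+ 2) * Y2 = X1 * (X1 * Y2 + X2 * (Y1 - Y3)) - X2 * (X1 * Y1 - (X1 * Y3 + X2 * Y2)) by ring.
  by rewrite hh h2 subrr; ring.
have e1 : (X1 ^+ 2 + X2 ^+ 2) * (Y1 - Y3) = 0.
  have -> : (X1 ^+ 2 + X2 ^+ 2) * (Y1 - Y3) = X2 * (X1 * Y2 + X2 * (Y1 - Y3)) + X1 * (X1 * Y1 - (X1 * Y3 + X2 * Y2)) by ring.
  by rewrite hh h2 subrr; ring.
move/eqP: e2; rewrite mulf_eq0 (negbTE hs) /= => /eqP ->.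
move/eqP: e1; rewrite mulf_eq0 (negbTE hs) /= subr_eq0 => /eqP ->; done.
Qed.

Lemma part3 (z : RP R 1 * RP R 2) : halfflat_set z ->
     (is_p101 z.2 <-> hermitian_str z).
Proof.
rewrite /halfflat_set /is_p101 /hermitian_str /lam1 /lam2 /lam3 /lam4 /= => h.
have := @alg3 (x1 z) (x2 z) (y1 z) (y2 z) (y3 z) (nz2 _) h.
rewrite /y1 /y2 /y3 => ->; done.
Qed.

Lemma part4 (z : RP R 1 * RP R 2) : halfflat_set z -> is_p101 z.2 ->
     iso_so3C (lie_bracket (x1 z) (x2 z) (y1 z) (y2 z) (y3 z)).
Proof.
move=> _ [h2 h13]; rewrite /y1 /y2 /y3 h2 h13; apply: iso_gen; first exact: nz2.
have := nz3 (repr z.2); rewrite /hcn /hc in h2 h13 *; rewrite h2 h13 eqxx /=.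
by rewrite orbb.
Qed.
End P13.
Section P1. Variable R : realType.
Local Open Scope quotient_scope.
Definition Mr : 'M[R]_2 := \matrix_(i < 2, j < 2)
  (if (val i == val j)%N then 0 else if (val i == 0)%N then -1 else 1).

Lemma Mr2 : Mr *m Mr = - 1%:M.
Proof.
apply/matrixP => i j; rewrite !mxE !big_ord_recl big_ord0 !mxE /=.
by case: i => [[|[|i]] Hi] //; case: j => [[|[|j]] Hj] //=; rewrite ?mxE /=; ring.
Qed.

Lemma Mr_unit : Mr \in unitmx.
Proof.
have h : Mr *m (- Mr) = 1%:M by rewrite mulmxN Mr2 opprK.
by case: (mulmx1_unit h).
Qed.

Lemma xMr (x : 'rV[R]_2) j : (x *m Mr) 0 j =
  if (val j == 0)%N then x 0 (inord 1) else - x 0 (inord 0).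
Proof.
rewrite !mxE !big_ord_recl big_ord0 !mxE /= (@io 1 0 isT) (@io 1 1 isT).
case: j => [[|[|j]] Hj] //= ; rewrite ?mulr0 ?mulr1 ?mulrN1; try ring.
- by rewrite add0r addr0; congr (x 0 _); apply: val_inj.
- by rewrite !addr0; congr (- x 0 _); apply: val_inj.
Qed.

Lemma projmapE (q : RP R 1) : exists w : nzvec R 1,
  projmap Mr q = \pi_(RP R 1) w /\ forall j, val w 0 j = (val (repr q) *m Mr) 0 j.
Proof.
rewrite /projmap; case: insubP => [w _ wE|hn].
  by exists w; split => // j; rewrite wE.
exfalso; move: hn; rewrite notin_setE /= => /negP/negPn/eqP h.
have : val (repr q) = 0.
  by rewrite -[val _]mulmx1 -[1%:M]opprK -Mr2 mulmxN mulmxA h !mul0mx oppr0.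
by move/eqP; rewrite (negbTE (nz_of (repr q))).
Qed.

Lemma part1 : exists M : 'M[R]_2, M \in unitmx /\
     forall z : RP R 1 * RP R 2,
       halfflat_set z <-> blowup101 (projmap M z.1, z.2).
Proof.
exists Mr; split; first exact: Mr_unit.
move=> [q y]; rewrite /halfflat_set /blowup101 /=.
have [w [-> wE]] := projmapE q.
have [l l0 lE] := prop_scale (repr_pi w).
rewrite /x1 /x2 /y1 /y2 /y3 /hcn /hc /= !lE !wE !xMr (@io 1 0 isT) (@io 1 1 isT) /=.
rewrite -(@io 1 0 isT) -(@io 1 1 isT).
set X0 := val (repr q) 0 (inord 0); set X1 := val (repr q) 0 (inord 1).
set Y0 := val (repr y) 0 (inord 0); set Y1 := val (repr y) 0 (inord 1);
  set Y2 := val (repr y) 0 (inord 2).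
split => h.
  apply/eqP; rewrite -subr_eq0.
  have -> : l * X1 * (Y0 - Y2) - l * - X0 * Y1 = l * (X0 * Y1 + X1 * (Y0 - Y2)) by ring.
  by rewrite h mulr0.
have : l * (X0 * Y1 + X1 * (Y0 - Y2)) = 0.
  have -> : l * (X0 * Y1 + X1 * (Y0 - Y2)) = l * X1 * (Y0 - Y2) - l * - X0 * Y1 by ring.
  by rewrite h subrr.
by move/eqP; rewrite mulf_eq0 (negbTE l0) /= => /eqP.
Qed.
End P1.
Section C. Variable R : realType. Local Open Scope quotient_scope.
Lemma cont_lin n (V W : 'rV[R]_n.+1) : continuous (fun t : R => t *: V + W).
Proof. move=> t; apply: cvgD; [apply: cvgZr_tmp; exact: cvg_id | exact: cvg_cst]. Qed.

Definition mknz n (v : 'rV[R]_n.+1) (h : v != 0) : nzvec R n := exist _ v (mem_set h).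

Lemma cont_nz n (g : R -> 'rV[R]_n.+1) (hg : forall t, g t != 0) : continuous g ->
  continuous (fun t => mknz (hg t)).
Proof.
move=> cg; apply: (@continuous_comp_initial _ _ _ (@set_val _ [set x : 'rV[R]_n.+1 | x != 0])).
exact: cg.
Qed.

Lemma cont_pi n (g : R -> 'rV[R]_n.+1) (hg : forall t, g t != 0) : continuous g ->
  continuous (fun t => \pi_(RP R n) (mknz (hg t))).
Proof.
move=> cg t; apply: (@continuous_comp _ _ _ (fun t => mknz (hg t))).
  exact: cont_nz.
exact: pi_continuous.
Qed.

Lemma cont_pair (T U V : topologicalType) (f : T -> U) (g : T -> V) :
  continuous f -> continuous g -> continuous (fun t => (f t, g t)).
Proof. move=> cf cg t; apply: cvg_pair; [exact: cf | exact: cg]. Qed.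

Lemma conn_range (U : topologicalType) (f : R -> U) : continuous f -> connected (range f).
Proof.
move=> cf; have := @connected_continuous_connected R U setT f.
apply.
  by apply/connected_intervalP => x y _ _ z _.
by apply: continuous_subspaceT => x; exact: cf.
Qed.
End C.
Notation o2 k := (@Ordinal 2 k isT).
Section P2. Variable R : realType.
Local Open Scope quotient_scope.
Definition xv (a b : R) : 'rV[R]_2 := \row_(j < 2) if (val j == 0)%N then a else b.
Definition yv (X0 X1 a b : R) : 'rV[R]_3 :=
  \row_(j < 3) match val j with 0%N => a + b * X0 | 1%N => - (b * X1) | _ => a end.
Definition gA1 t := t *: xv 0 1 + xv 1 0.
Definition gA2 t := t *: xv 1 0 + xv 0 1.
Definition gS1 X0 X1 t := t *: yv X0 X1 0 1 + yv X0 X1 1 0.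
Definition gS2 X0 X1 t := t *: yv X0 X1 1 0 + yv X0 X1 0 1.

Lemma nzA1 t : gA1 t != 0.
Proof.
apply/eqP => /matrixP /(_ 0 (o2 0)); rewrite !mxE /= => h; lra.
Qed.
Lemma nzA2 t : gA2 t != 0.
Proof.
apply/eqP => /matrixP /(_ 0 (o2 1)); rewrite !mxE /= => h; lra.
Qed.
Lemma nzS1 X0 X1 t : gS1 X0 X1 t != 0.
Proof.
apply/eqP => /matrixP /(_ 0 (o3 2)); rewrite !mxE /= => h; lra.
Qed.
Lemma nzS2 X0 X1 t : (X0 != 0) || (X1 != 0) -> gS2 X0 X1 t != 0.
Proof.
move=> hX; apply/eqP => /matrixP h.
have h0 := h 0 (o3 0); have h1 := h 0 (o3 1); have h2 := h 0 (o3 2).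
rewrite !mxE /= in h0 h1 h2.
have t0 : t = 0 by lra.
rewrite t0 in h0 h1.
have e0 : X0 = 0 by lra.
have e1 : X1 = 0 by lra.
by move: hX; rewrite e0 e1 eqxx.
Qed.
End P2.
Section P2b. Variable R : realType.
Local Open Scope quotient_scope.

Lemma pi_scale n (p v : nzvec R n) (l : R) :
  (forall i, val p 0 i = l * val v 0 i) -> \pi_(RP R n) p = \pi_(RP R n) v.
Proof. by move=> h; apply/pi_eqP; apply: scale_prop h. Qed.

Lemma nz2o (p : nzvec R 1) : (val p 0 (o2 0) != 0) || (val p 0 (o2 1) != 0).
Proof. by have := nz2 p; rewrite (@io 1 0 isT) (@io 1 1 isT). Qed.

Lemma hf_pi (p : nzvec R 1) (w : nzvec R 2) :
  halfflat_set (\pi_(RP R 1) p, \pi_(RP R 2) w) <->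
  val p 0 (o2 0) * val w 0 (o3 1) + val p 0 (o2 1) * (val w 0 (o3 0) - val w 0 (o3 2)) = 0.
Proof.
rewrite /halfflat_set /x1 /x2 /y1 /y2 /y3 /hcn /hc /=.
rewrite (@io 1 0 isT) (@io 1 1 isT) (@io 2 0 isT) (@io 2 1 isT) (@io 2 2 isT).
have [l l0 lE] := prop_scale (repr_pi p); have [m m0 mE] := prop_scale (repr_pi w).
rewrite !lE !mE.
set P0 := val p 0 _; set P1 := val p 0 _.
set W0 := val w 0 _; set W1 := val w 0 _; set W2 := val w 0 _.
have -> : l * P0 * (m * W0) + l * P1 * (m * W1 - m * W2) =
  (l * m) * (P0 * W0 + P1 * (W1 - W2)) by ring.
split; last by move=> ->; rewrite mulr0.
by move/eqP; rewrite mulf_eq0 mulf_eq0 (negbTE l0) (negbTE m0) /= => /eqP.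
Qed.

Lemma hf_x (x : RP R 1) (w : nzvec R 2) :
  halfflat_set (x, \pi_(RP R 2) w) <->
  val (repr x) 0 (o2 0) * val w 0 (o3 1) +
  val (repr x) 0 (o2 1) * (val w 0 (o3 0) - val w 0 (o3 2)) = 0.
Proof.
have -> : (x, \pi_(RP R 2) w) = (\pi_(RP R 1) (repr x), \pi_(RP R 2) w) by rewrite reprK.
exact: hf_pi.
Qed.

Definition Xo (x : RP R 1) k := val (repr x) 0 k.
Definition P101 := \pi_(RP R 2) (mknz (@nzS1 R 0 0 0)).
Definition a1 t := (\pi_(RP R 1) (mknz (@nzA1 R t)), P101).
Definition a2 t := (\pi_(RP R 1) (mknz (@nzA2 R t)), P101).
Definition s1 (x : RP R 1) t :=
  (x, \pi_(RP R 2) (mknz (@nzS1 R (Xo x (o2 0)) (Xo x (o2 1)) t))).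
Definition s2 (x : RP R 1) t :=
  (x, \pi_(RP R 2) (mknz (@nzS2 R (Xo x (o2 0)) (Xo x (o2 1)) t (nz2o (repr x))))).

Lemma cA1 : continuous a1.
Proof.
rewrite /a1 /a2; apply: cont_pair; last exact: cst_continuous.
have c1 : continuous (@gA1 R) by exact: cont_lin.
exact: (cont_pi (hg := (@nzA1 R)) c1).
Qed.
Lemma cA2 : continuous a2.
Proof.
rewrite /a1 /a2; apply: cont_pair; last exact: cst_continuous.
have c1 : continuous (@gA2 R) by exact: cont_lin.
exact: (cont_pi (hg := (@nzA2 R)) c1).
Qed.
Lemma cS1 x : continuous (s1 x).
Proof.
rewrite /s1 /s2; apply: cont_pair; first exact: cst_continuous.
have c1 : continuous (@gS1 R (Xo x (o2 0)) (Xo x (o2 1))) by exact: cont_lin.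
exact: (cont_pi (hg := (@nzS1 R _ _)) c1).
Qed.
Lemma cS2 x : continuous (s2 x).
Proof.
rewrite /s1 /s2; apply: cont_pair; first exact: cst_continuous.
have c1 : continuous (@gS2 R (Xo x (o2 0)) (Xo x (o2 1))) by exact: cont_lin.
exact: (cont_pi (hg := (fun t => @nzS2 R _ _ t (nz2o (repr x)))) c1).
Qed.
End P2b.
Section P2c. Variable R : realType.
Local Open Scope quotient_scope.

Lemma ab_exists (X0 X1 Y0 Y1 Y2 : R) : (X0 != 0) || (X1 != 0) ->
  X0 * Y1 + X1 * (Y0 - Y2) = 0 ->
  exists a b, [/\ Y0 = a + b * X0, Y1 = - (b * X1) & Y2 = a].
Proof.
move=> hX h; have [X10|X1n] := eqVneq X1 0.
  have X0n : X0 != 0 by move: hX; rewrite X10 eqxx orbF.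
  move: h; rewrite X10 mul0r addr0 => /eqP; rewrite mulf_eq0 (negbTE X0n) /= => /eqP Y10.
  exists Y2, ((Y0 - Y2) / X0); split; first by field.
    by rewrite Y10; ring.
  done.
exists Y2, (- Y1 / X1); split => //.
  have e : Y0 = Y2 - X0 * Y1 / X1.
    apply: (mulIf X1n); rewrite mulrBl divfK //.
    have -> : Y0 * X1 = X1 * (Y0 - Y2) + Y2 * X1 by ring.
    have -> : X1 * (Y0 - Y2) = - (X0 * Y1) by apply/eqP; rewrite -addr_eq0 addrC h.
    ring.
  by rewrite e; field.
by field.
Qed.

Definition Aset : set (RP R 1 * RP R 2) := range (@a1 R) `|` range (@a2 R).
Definition Sset (x : RP R 1) : set (RP R 1 * RP R 2) := range (s1 x) `|` range (s2 x).


Lemma x_chart (x : RP R 1) : Aset (x, P101 R).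
Proof.
have := nz2o (repr x); set X0 := val (repr x) 0 (o2 0); set X1 := val (repr x) 0 (o2 1) => hX.
have [X00|X0n] := eqVneq X0 0.
  have X1n : X1 != 0 by move: hX; rewrite X00 eqxx.
  right; exists 0 => //; rewrite /a2; congr (_, _).
  rewrite -[RHS]reprK; apply: (@pi_scale _ _ _ _ (X1^-1)) => i.
  case: i => [[|[|i]] Hi] //=; rewrite !mxE /= (bool_irrelevance Hi isT) -/X0 -/X1.
    by rewrite X00; ring.
  by field.
left; exists (X1 / X0) => //; rewrite /a1; congr (_, _).
rewrite -[RHS]reprK; apply: (@pi_scale _ _ _ _ (X0^-1)) => i.
case: i => [[|[|i]] Hi] //=; rewrite !mxE /= (bool_irrelevance Hi isT) -/X0 -/X1.
  by field.
by field.
Qed.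

Lemma x_S (x : RP R 1) : Sset x (x, P101 R).
Proof.
left; exists 0 => //; rewrite /s1; congr (_, _).
apply: (@pi_scale _ _ _ _ 1) => i.
by case: i => [[|[|[|i]]] Hi] //=; rewrite !mxE /=; ring.
Qed.

Lemma conn_A : connected Aset.
Proof.
apply: connectedU; last 2 first.
- exact: conn_range (@cA1 R).
- exact: conn_range (@cA2 R).
exists (a1 1); split; first by exists 1.
exists 1 => //; rewrite /a1 /a2; congr (_, _).
apply: (@pi_scale _ _ _ _ 1) => i.
by case: i => [[|[|i]] Hi] //=; rewrite !mxE /=; ring.
Qed.

Lemma conn_S x : connected (Sset x).
Proof.
apply: connectedU; last 2 first.
- apply: conn_range; exact: cS1.
- apply: conn_range; exact: cS2.
exists (s1 x 1); split; first by exists 1.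
exists 1 => //; rewrite /s1 /s2; congr (_, _).
apply: (@pi_scale _ _ _ _ 1) => i.
by case: i => [[|[|[|i]]] Hi] //=; rewrite !mxE /=; ring.
Qed.

Lemma hf_cover : @halfflat_set R = \bigcup_(x in setT) (Aset `|` Sset x).
Proof.
apply/seteqP; split.
- move=> [x y] h; exists x => //; right.
  have hX := nz2o (repr x).
  move: h; rewrite -[y]reprK hf_x => h.
  set X0 := val (repr x) 0 (o2 0) in hX h; set X1 := val (repr x) 0 (o2 1) in hX h.
  have [a [b [e0 e1 e2]]] := ab_exists hX h.
  have [a0|an] := eqVneq a 0.
    have bn : b != 0.
      apply: contraT => /negPn /eqP b0.
      have := nz3 (repr y); rewrite (@io 2 0 isT) (@io 2 1 isT) (@io 2 2 isT).
      by rewrite e0 e1 e2 a0 b0 !mul0r oppr0 addr0 eqxx.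
    right; exists (a / b) => //; rewrite /s2; congr (_, _).
    symmetry; apply: (@pi_scale _ _ _ _ b) => i.
    case: i => [[|[|[|i]]] Hi] //=; rewrite !mxE /= (bool_irrelevance Hi isT) ?e0 ?e1 ?e2 /Xo -/X0 -/X1.
    + by field.
    + by field.
    + by field.
  left; exists (b / a) => //; rewrite /s1; congr (_, _).
  symmetry; apply: (@pi_scale _ _ _ _ a) => i.
  case: i => [[|[|[|i]]] Hi] //=; rewrite !mxE /= (bool_irrelevance Hi isT) ?e0 ?e1 ?e2 /Xo -/X0 -/X1.
  + by field.
  + by field.
  + by field.
- move=> z [x _] [[[t _ <-]|[t _ <-]]|[[t _ <-]|[t _ <-]]]; rewrite /a1 /a2 /s1 /s2.
  + apply/hf_pi => /=; rewrite !mxE /=; match goal with |- ?a = ?b => change (a = b :> R) end; ring.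
  + apply/hf_pi => /=; rewrite !mxE /=; match goal with |- ?a = ?b => change (a = b :> R) end; ring.
  + apply/hf_x => /=; rewrite !mxE /= /Xo; match goal with |- ?a = ?b => change (a = b :> R) end; ring.
  + apply/hf_x => /=; rewrite !mxE /= /Xo; match goal with |- ?a = ?b => change (a = b :> R) end; ring.
Qed.

Lemma part2 : connected (@halfflat_set R).
Proof.
rewrite hf_cover; apply: bigcup_connected.
  by exists (a1 0) => x _; left; left; exists 0.
move=> x _; apply: connectedU.
- by exists (x, P101 R); split; [exact: x_chart | exact: x_S].
- exact: conn_A.
- exact: conn_S.
Qed.
End P2c.
Close Scope complex_scope.

Theorem proposition3p18 (R : realType) :
  (* the half-flat space is, over the projection onto RP^2, the blow-up of RP^2
     at [1:0:1]: it is identified with the standard model by a projective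
     automorphism of the RP^1 factor, compatibly with the second projection *)
  (exists M : 'M[R]_2, M \in unitmx /\
     forall z : RP R 1 * RP R 2,
       halfflat_set z <-> blowup101 (projmap M z.1, z.2)) /\
  (* in particular it is connected *)
  connected (@halfflat_set R) /\
  (* the points over [1:0:1] are exactly the Hermitian ones *)
  (forall z : RP R 1 * RP R 2, halfflat_set z ->
     (is_p101 z.2 <-> hermitian_str z)) /\
  (* and the underlying Lie algebra is then so(3,C) *)
  (forall z : RP R 1 * RP R 2, halfflat_set z -> is_p101 z.2 ->
     iso_so3C (lie_bracket (x1 z) (x2 z) (y1 z) (y2 z) (y3 z))).
Proof.
split; first exact: part1.
split; first exact: part2.
split; first exact: part3.
exact: part4.
Qed.
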